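(* Let $F:\mathcal{G}_{\Sigma,\Delta,\pi}\to\mathcal{G}_{\Sigma,\Delta,\pi}$ be a causal graph dynamics. For every renaming $R$, $F$ admits at least one conjugate renaming $R'$, i.e. $F\circ R=R'\circ F$. Moreover, for any local rule $f$ of $F$ and any renaming $R$, $\mathrm{Conj}_f(R)\subseteq\mathrm{Conj}_F(R)$.
   Context: Fix an uncountably infinite set $\mathcal{V}$. For sets $\Sigma,\Delta$ and finite $\pi$, a graph $G$: countable $V(G)\subset\mathcal{V}$, a set $E(G)$ of pairwise disjoint two-element subsets of $V(G)\times\pi$ (write $u\!:\!i$), partial labelings $\sigma(G):V(G)\rightharpoonup\Sigma$, $\delta(G):E(G)\rightharpoonup\Delta$; $\mathcal{G}_{\Sigma,\Delta,\pi}$ the set of graphs. A renaming is a bijection $R:\mathcal{V}\to\mathcal{V}$, acting on edges by $R(\{u\!:\!i,v\!:\!j\})=\{R(u)\!:\!i,R(v)\!:\!j\}$, on graphs by $V(R(G))=R(V(G))$, $E(R(G))=R(E(G))$, $\sigma(R(G))=\sigma(G)\circ R^{-1}$, $\delta(R(G))=\delta(G)\circ R^{-1}$, and on pointed graphs by $R(G,v)=(R(G),R(v))$. Consistency: edge sets jointly pairwise disjoint, labelings agree on common domains; union/intersection componentwise; $\varnothing$ empty graph. Disk $G^r_c=(H,c)$: $V(H)=B_G(c,r+1)$ (shortest-path ball), $E(H)$ edges of $G$ with an endpoint in $B_G(c,r)$, $\sigma(H)=\sigma(G)|_{B_G(c,r)}$, $\delta(H)=\delta(G)|_{E(H)}$;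 $\mathcal{D}^r$ set of radius-$r$ disks. A local rule of radius $r$ is $f:\mathcal{D}^r\to\mathcal{G}$ with (1) for each renaming $R$ a renaming $R'$ with $f\circ R=R'\circ f$; (2) families of disks with empty intersection have images with empty intersection; (3) $|V(f(D))|$ uniformly bounded; (4) $f(G^r_u),f(G^r_v)$ consistent for all $G$ and $u,v\in V(G)$. A CGD is $F(G)=\bigcup_{v\in V(G)}f(G^r_v)$ for some local rule $f$ (a local rule of $F$). For a map $X$ (either $F$ or $f$) and renaming $R$, $\mathrm{Conj}_X(R)$ is the set of renamings $R'$ with $X\circ R=R'\circ X$. *)

(* Defs.v *)
From mathcomp Require Import all_boot.
From mathcomp Require Import boolp classical_sets cardinality.
From Stdlib Require List.
Set Implicit Arguments. Unset Strict Implicit. Unset Printing Implicit Defensive.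
Local Open Scope classical_set_scope.

Section CGD.
Context {V Sigma Delta : Type} {Pi : finType}.

Definition port := (V * Pi)%type.
(* an edge is a subset of V x Pi (well-formedness asks for exactly 2 elements) *)
Definition edge := set port.

(* A (raw) graph.  Partial labelings are represented by their graphs
   (sets of pairs); functionality and domains are imposed by [wf_graph]. *)
Record graph := mkGraph {
  V_ : set V;
  E_ : set edge;
  sig_ : set (V * Sigma);
  del_ : set (edge * Delta) }.

Definition pgraph := (graph * V)%type.

Definition wf_graph (G : graph) : Prop :=
  countable (V_ G) /\
  (forall e, E_ G e -> exists a b : port,
       a <> b /\ e = [set a] `|` [set b] /\ V_ G a.1 /\ V_ G b.1) /\
  (forall e e', E_ G e -> E_ G e' -> e <> e' -> e `&` e' = set0) /\
  (forall v s, sig_ G (v, s) -> V_ G v) /\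
  (forall v s s', sig_ G (v, s) -> sig_ G (v, s') -> s = s') /\
  (forall e d, del_ G (e, d) -> E_ G e) /\
  (forall e d d', del_ G (e, d) -> del_ G (e, d') -> d = d').

Definition empty_graph : graph := mkGraph set0 set0 set0 set0.

Definition renaming (R : V -> V) : Prop := bijective R.
Definition rename_port (R : V -> V) (p : port) : port := (R p.1, p.2).
Definition rename_edge (R : V -> V) (e : edge) : edge := rename_port R @` e.
Definition rename (R : V -> V) (G : graph) : graph :=
  mkGraph (R @` V_ G) (rename_edge R @` E_ G)
          ((fun x => (R x.1, x.2)) @` sig_ G)
          ((fun x => (rename_edge R x.1, x.2)) @` del_ G).
Definition prename (R : V -> V) (D : pgraph) : pgraph := (rename R D.1, R D.2).

Definition consistent (G H : graph) : Prop :=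
  (forall e e', (E_ G e \/ E_ H e) -> (E_ G e' \/ E_ H e') -> e <> e' ->
      e `&` e' = set0) /\
  (forall v s s', sig_ G (v, s) -> sig_ H (v, s') -> s = s') /\
  (forall e d d', del_ G (e, d) -> del_ H (e, d') -> d = d').

Definition bigunion {I : Type} (A : set I) (g : I -> graph) : graph :=
  mkGraph (\bigcup_(i in A) V_ (g i)) (\bigcup_(i in A) E_ (g i))
          (\bigcup_(i in A) sig_ (g i)) (\bigcup_(i in A) del_ (g i)).
Definition bigint {I : Type} (A : set I) (g : I -> graph) : graph :=
  mkGraph (\bigcap_(i in A) V_ (g i)) (\bigcap_(i in A) E_ (g i))
          (\bigcap_(i in A) sig_ (g i)) (\bigcap_(i in A) del_ (g i)).

Definition adj (G : graph) (u v : V) : Prop :=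
  exists e, E_ G e /\ exists i j : Pi, e (u, i) /\ e (v, j) /\ (u, i) <> (v, j).

Fixpoint ball (G : graph) (c : V) (n : nat) : set V :=
  match n with
  | 0 => [set c] `&` V_ G
  | n'.+1 => ball G c n' `|` [set v | exists u, ball G c n' u /\ adj G u v]
  end.

Definition disk_edges (G : graph) (r : nat) (c : V) : set edge :=
  [set e | E_ G e /\ exists p : port, e p /\ ball G c r p.1].
Definition disk (G : graph) (r : nat) (c : V) : pgraph :=
  (mkGraph (ball G c r.+1) (disk_edges G r c)
           [set x | sig_ G x /\ ball G c r x.1]
           [set x | del_ G x /\ disk_edges G r c x.1 ], c).

Definition disks (r : nat) : set pgraph :=
  [set D | exists G c, wf_graph G /\ V_ G c /\ D = disk G r c].

Definition conj_rule (r : nat) (f : pgraph -> graph) (R R' : V -> V) : Prop :=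
  renaming R' /\ forall D, disks r D -> f (prename R D) = rename R' (f D).
Definition conj_dyn (F : graph -> graph) (R R' : V -> V) : Prop :=
  renaming R' /\ forall G, wf_graph G -> F (rename R G) = rename R' (F G).

Definition local_rule (r : nat) (f : pgraph -> graph) : Prop :=
  (forall D, disks r D -> wf_graph (f D)) /\
  (forall R, renaming R -> exists R', conj_rule r f R R') /\
  (forall S : set pgraph, S `<=` disks r ->
      bigint S (fun D => D.1) = empty_graph -> bigint S f = empty_graph) /\
  (exists b : nat, forall D, disks r D ->
      exists s : seq V, size s <= b /\ V_ (f D) `<=` [set x | Stdlib.Lists.List.In x s]) /\
  (forall G u v, wf_graph G -> V_ G u -> V_ G v ->
      consistent (f (disk G r u)) (f (disk G r v))).

Definition local_rule_of (r : nat) (f : pgraph -> graph) (F : graph -> graph) :=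
  local_rule r f /\
  forall G, wf_graph G -> F G = bigunion (V_ G) (fun v => f (disk G r v)).

Definition is_CGD (F : graph -> graph) : Prop :=
  exists r f, local_rule_of r f F.

End CGD.

(* Main.v *)
Require Import Defs.
From mathcomp Require Import all_boot.
From mathcomp Require Import boolp classical_sets cardinality.
Set Implicit Arguments. Unset Strict Implicit. Unset Printing Implicit Defensive.
Local Open Scope classical_set_scope.

Section Aux.
Context {V Sigma Delta : Type} {Pi : finType}.
Notation graph := (@graph V Sigma Delta Pi).

Lemma graph_ext (G H : graph) : V_ G = V_ H -> E_ G = E_ H -> sig_ G = sig_ H ->
  del_ G = del_ H -> G = H.
Proof. by case: G => ????; case: H => ???? /= -> -> -> ->. Qed.

Variable R : V -> V.
Hypothesis Rinj : injective R.

Lemma rp_inj : injective (@rename_port V Pi R).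
Proof. by case=> a i [b j] [] /Rinj -> ->. Qed.

Lemma re_mem (e : @edge V Pi) p : rename_edge R e (rename_port R p) <-> e p.
Proof.
split; last by move=> ep; exists p.
by case=> q eq /rp_inj <-.
Qed.

Lemma re_inj : injective (@rename_edge V Pi R).
Proof.
move=> e e' H; rewrite predeqE => p; rewrite -!(re_mem _ p) H; done.
Qed.

Lemma adj_ren (G : graph) u v : adj (rename R G) (R u) (R v) <-> adj G u v.
Proof.
split.
- case=> _ [[e Ee <-]] [i [j [h1 [h2 h3]]]].
  exists e; split => //; exists i, j.
  split; first by apply/(re_mem e (u, i)).
  split; first by apply/(re_mem e (v, j)).
  by move=> [E1 E2]; apply: h3; rewrite E1 E2.
- case=> e [Ee [i [j [h1 [h2 h3]]]]].
  exists (rename_edge R e); split; first by exists e.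
  exists i, j; split; first by apply/(re_mem e (u, i)).
  split; first by apply/(re_mem e (v, j)).
  by move=> [/Rinj E1 E2]; apply: h3; rewrite E1 E2.
Qed.

Variable Rinv : V -> V.
Hypothesis RK : cancel Rinv R.

Lemma ball_ren (G : graph) c n : ball (rename R G) (R c) n = R @` ball G c n.
Proof.
elim: n => [|n IH] /=; rewrite predeqE => w; split.
- by case=> /= -> [v Vv Ev]; exists c => //; split => //; rewrite -(Rinj Ev).
- by case=> v [/= -> Vc] <-; split => //; exists c.
- case=> [|[u [Bu Ad]]]; first by rewrite IH; case=> v Bv <-; exists v => //; left.
  rewrite IH in Bu; case: Bu => u' Bu' Eu; subst u.
  rewrite -(RK w) in Ad *; exists (Rinv w) => //; right; exists u'; split => //.
  by apply/adj_ren.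
- case=> v [Bv|[u [Bu Ad]]] <-; first by left; rewrite IH; exists v.
  right; exists (R u); split; first by rewrite IH; exists u.
  by apply/adj_ren.
Qed.

Lemma de_ren (G : graph) r c :
  disk_edges (rename R G) r (R c) = rename_edge R @` disk_edges G r c.
Proof.
rewrite predeqE => e; split.
- case=> [[e0 Ee0 <-]] [p [ep Bp]].
  have [q eq Eq] := ep; subst p.
  exists e0 => //; split => //; exists q; split => //.
  move: Bp; rewrite ball_ren /=; case=> v Bv Ev; by rewrite (Rinj Ev) in Bv.
- case=> e0 [Ee0 [q [eq Bq]]] <-; split; first by exists e0.
  exists (rename_port R q); split; first by exists q.
  by rewrite ball_ren; exists q.1.
Qed.

Lemma disk_ren (G : graph) r c :
  disk (rename R G) r (R c) = prename R (disk G r c).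
Proof.
rewrite /disk /prename /=; congr pair; apply: graph_ext => /=.
- exact: (ball_ren G c r.+1).
- exact: de_ren.
- rewrite predeqE => x; split.
  + case=> [[y sy <-]] /=; rewrite ball_ren => -[v Bv Ev].
    by exists y => //; split => //; rewrite (Rinj Ev) in Bv.
  + case=> y [sy By] <-; split; first by exists y.
    by rewrite /= ball_ren; exists y.1.
- rewrite predeqE => x; split.
  + case=> [[y dy <-]] /=; rewrite de_ren => -[e0 De Ee].
    by exists y => //; split => //; rewrite (re_inj Ee) in De.
  + case=> y [dy Dy] <-; split; first by exists y.
    by rewrite /= de_ren; exists y.1.
Qed.

Lemma wf_ren (G : graph) : wf_graph G -> wf_graph (rename R G).
Proof.
case=> cV [hE [hD [hs [hs' [hd hd']]]]]; split.
  exact: sub_countable (card_image_le R _) cV.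
split.
  move=> _ [e Ee <-]; have [a [b [ab [-> [Va Vb]]]]] := hE e Ee.
  exists (rename_port R a), (rename_port R b); split.
    by move/rp_inj.
  split; last by split; [exists a.1|exists b.1].
  rewrite /rename_edge predeqE => p; split.
    by case=> q [->|->] <-; [left|right].
  by case=> ->; [exists a; [left|]|exists b; [right|]].
split.
  move=> _ _ [e Ee <-] [e' Ee' <-] ne; rewrite predeqE => p; split => //.
  case=> [[q eq Eq] [q' eq' Eq']]; subst p; rewrite (rp_inj Eq') in eq'.
  have : (e `&` e') q by [].
  by rewrite hD //; move=> H; apply: ne; congr rename_edge; [].
split.
  by move=> v s [[u s0] su /= [<- _]]; exists u; [exact: (hs _ s0)|].
split.
  move=> v s s' [[u t] su E] [[u' t'] su' E'].
  case: E => Eu Et; case: E' => Eu' Et'.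
  subst; move: Eu'; rewrite /= => /Rinj Eu; subst.
  exact: hs' su su'.
split.
  by move=> e d [[e0 d0] de /= [<- _]]; exists e0; [exact: (hd _ d0)|].
move=> e d d' [[u t] su E] [[u' t'] su' E'].
case: E => Eu Et; case: E' => Eu' Et'.
subst; move: Eu'; rewrite /= => /re_inj Eu; subst.
exact: hd' su su'.
Qed.

End Aux.

Lemma part2 (V Sigma Delta : Type) (Pi : finType)
  (F : @graph V Sigma Delta Pi -> @graph V Sigma Delta Pi) r f :
  local_rule_of r f F ->
  forall R R' : V -> V, renaming R -> conj_rule r f R R' -> conj_dyn F R R'.
Proof.
move=> [_ HF] R R' [Rinv RK1 RK2] [R'ren Hc]; split => // G wG.
have Rinj : injective R by exact: can_inj RK1.
have key : forall v, V_ G v ->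
    f (disk (rename R G) r (R v)) = rename R' (f (disk G r v)).
  move=> v Vv; rewrite (disk_ren Rinj RK2) Hc //.
  by exists G, v.
rewrite (HF _ (wf_ren Rinj wG)) (HF _ wG) /bigunion /rename /=.
by apply: graph_ext => /=; rewrite bigcup_image image_bigcup;
  apply: eq_bigcupr => v Vv; rewrite key.
Qed.

Theorem proposition1p7 (V Sigma Delta : Type) (Pi : finType)
  (V_uncountable : ~ countable [set: V])
  (F : @graph V Sigma Delta Pi -> @graph V Sigma Delta Pi)
  (HF : is_CGD F) :
  (forall R : V -> V, renaming R -> exists R' : V -> V, conj_dyn F R R') /\
  (forall (r : nat) (f : @pgraph V Sigma Delta Pi -> @graph V Sigma Delta Pi),
     local_rule_of r f F ->
     forall R R' : V -> V, renaming R -> conj_rule r f R R' -> conj_dyn F R R').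
Proof.
split; last exact: part2.
move=> R HR; case: HF => r [f Hf].
have [_ [Hex _]] := Hf.1.
have [R' HR'] := Hex R HR.
by exists R'; exact: part2 Hf R R' HR HR'.
Qed.
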